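(* Let $m\ge3$ and $n\ge2$. For all $i,j\in[n]$ with $i\ne j$ and all $\alpha>0$, the tensor $\alpha(e^{(i)}-e^{(j)})^m+\alpha e^m$ belongs to $DNN_{m,n}\setminus CP_{m,n}$.
   Context: $e^{(i)}$ is the $i$th standard basis vector of $\mathbb{R}^n$ and $e=(1,\dots,1)^T\in\mathbb{R}^n$; $(u^m)_{i_1\ldots i_m}=u_{i_1}\cdots u_{i_m}$. $(\mathcal{A}x^{m-1})_i=\sum_{i_2,\dots,i_m}a_{ii_2\ldots i_m}x_{i_2}\cdots x_{i_m}$; an H-eigenvalue of $\mathcal{A}\in\mathbb{S}_{m,n}$ is $\lambda\in\mathbb{R}$ with $\mathcal{A}x^{m-1}=\lambda(x_i^{m-1})_i$ for some nonzero $x\in\mathbb{R}^n$. $DNN_{m,n}$ is the set of symmetric tensors with all entries nonnegative and all H-eigenvalues nonnegative. $CP_{m,n}$ is the set of tensors $\sum_{k=1}^r(u^{(k)})^m$ with $u^{(k)}\in\mathbb{R}^n_+$. *)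

(* Defs.v *)
(* scalars range over an arbitrary real closed field R
   (elementarily equivalent to the reals). *)
From HB Require Import structures.
From mathcomp Require Import all_boot all_order all_algebra.
Set Implicit Arguments. Unset Strict Implicit. Unset Printing Implicit Defensive.
Import Order.TTheory GRing.Theory Num.Theory.
Local Open Scope ring_scope.

(* A real tensor of order m and dimension n is represented as a function on
   index sequences; only sequences of length m are meaningful.
   A [:: i1; ...; im] stands for a_{i1 ... im}. *)
Definition tensor (R : rcfType) (n : nat) := seq 'I_n -> R.

Definition tpow (R : rcfType) (n : nat) (u : 'I_n -> R) : tensor R n :=
  fun s => \prod_(k <- s) u k.

Definition ebasis (R : rcfType) (n : nat) (i : 'I_n) : 'I_n -> R :=
  fun k => if k == i then 1 else 0.
Definition eones (R : rcfType) (n : nat) : 'I_n -> R := fun _ => 1.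

Definition symmetric_tensor (R : rcfType) (m n : nat) (A : tensor R n) : Prop :=
  forall s t : seq 'I_n, size s = m -> perm_eq s t -> A s = A t.

Definition tapply (R : rcfType) (m n : nat) (A : tensor R n) (x : 'I_n -> R)
  (i : 'I_n) : R :=
  \sum_(t : (m.-1).-tuple 'I_n) A (i :: t) * \prod_(k <- t) x k.

Definition H_eigenvalue (R : rcfType) (m n : nat) (A : tensor R n) (l : R) : Prop :=
  exists x : 'I_n -> R, (exists i, x i != 0) /\
    forall i, tapply m A x i = l * x i ^+ m.-1.

Definition DNN (R : rcfType) (m n : nat) (A : tensor R n) : Prop :=
  [/\ symmetric_tensor m A,
      (forall s : seq 'I_n, size s = m -> 0 <= A s) &
      (forall l : R, H_eigenvalue m A l -> 0 <= l)].

Definition CP (R : rcfType) (m n : nat) (A : tensor R n) : Prop :=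
  exists (r : nat) (u : 'I_r -> 'I_n -> R),
    (forall k i, 0 <= u k i) /\
    forall s : seq 'I_n, size s = m -> A s = \sum_(k < r) tpow (u k) s.

(* Main.v *)
Require Import Defs.
From HB Require Import structures.
From mathcomp Require Import all_boot all_order all_algebra.
From mathcomp Require Import ring lra zify.
Import Order.TTheory GRing.Theory Num.Theory.
Local Open Scope ring_scope.

Lemma sum_tuple_prod (R : comNzRingType) n (f : 'I_n -> R) p :
  \sum_(t : p.-tuple 'I_n) \prod_(k <- t) f k = (\sum_k f k) ^+ p.
Proof.
elim: p => [|p IH].
  rewrite (big_pred1 [tuple]); first by rewrite big_nil expr0.
  by move=> t; rewrite /pred1 /=; case: eqP => // -[]; exact: tuple0.
pose h (q : 'I_n * p.-tuple 'I_n) : p.+1.-tuple 'I_n := [tuple of q.1 :: q.2].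
rewrite (reindex h) /=; last first.
  exists (fun t : p.+1.-tuple 'I_n => (thead t, behead_tuple t)) => [[a t] _|t _].
    by congr pair; apply: val_inj.
  by rewrite /h /=; apply: val_inj; rewrite /= [in RHS](tuple_eta t).
rewrite -(pair_big xpredT xpredT (fun a t => \prod_(k <- h (a, t)) f k)) /=.
rewrite exprS big_distrl /=; apply: eq_bigr => a _.
by rewrite -IH big_distrr /=; apply: eq_bigr => t _; rewrite big_cons.
Qed.

Lemma prod_nseq (R : comNzRingType) (I : Type) (F : I -> R) a c :
  \prod_(k <- nseq c a) F k = F a ^+ c.
Proof. by elim: c => [|c IH]; rewrite ?big_nil ?expr0 // big_cons IH exprS. Qed.

Lemma tapplyE (R : rcfType) n m (a : R) (u : 'I_n -> R) x k :
  tapply m (fun s => a * tpow u s + a * tpow (@eones R n) s) x k =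
  a * u k * (\sum_l u l * x l) ^+ m.-1 + a * (\sum_l x l) ^+ m.-1.
Proof.
rewrite /tapply -(@sum_tuple_prod _ _ (fun l => u l * x l)) -(@sum_tuple_prod _ _ x).
rewrite !mulr_sumr -big_split; apply: eq_bigr => t _.
have E1 : \prod_(l <- t) (@eones R n) l = 1 by apply: big1.
rewrite /tpow !big_cons E1 big_split /= /eones; ring.
Qed.

Lemma prod_le1 {R : rcfType} {n} {u : 'I_n -> R} (hu : forall k, `|u k| <= 1) s :
  `|\prod_(k <- s) u k| <= 1.
Proof.
elim: s => [|a s IH]; first by rewrite big_nil normr1.
by rewrite big_cons normrM mulr_ile1.
Qed.

Theorem mainTheorem16 (R : rcfType) (m n : nat) (hm : (3 <= m)%N) (hn : (2 <= n)%N)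
  (i j : 'I_n) (hij : i != j) (alpha : R) (halpha : 0 < alpha) :
  let T : tensor R n := fun s =>
    alpha * tpow (fun k => @ebasis R n i k - @ebasis R n j k) s
    + alpha * tpow (@eones R n) s in
  DNN m T /\ ~ CP m T.
Proof.
move=> T.
pose u := fun k => @ebasis R n i k - @ebasis R n j k.
have ui : u i = 1 by rewrite /u /ebasis eqxx (negbTE hij) subr0.
have uj : u j = -1 by rewrite /u /ebasis eqxx eq_sym (negbTE hij) sub0r.
have hu : forall k, `|u k| <= 1.
  move=> k; rewrite /u /ebasis.
  by case: (k == i); case: (k == j); rewrite ?subrr ?subr0 ?sub0r ?normrN ?normr1 ?normr0.
have E1 : forall s, tpow (@eones R n) s = 1 by move=> s; apply: big1.
have TE : forall s, T s = alpha * tpow u s + alpha by move=> s; rewrite /T E1 mulr1.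
split.
  split.
  - move=> s t _ hst; rewrite !TE /tpow (perm_big _ hst) //.
  - move=> s _; rewrite TE.
    have := prod_le1 hu s; rewrite ler_norml => /andP[h1 h2].
    rewrite /tpow; set P := \prod_(_ <- _) _ in h1 h2 *.
    have : 0 <= alpha * (P + 1) by apply: mulr_ge0; [exact: ltW | lra].
    by rewrite mulrDr mulr1.
  - move=> l [x [[i0 hi0] heq]].
    have heq' : forall k, alpha * u k * (\sum_l u l * x l) ^+ m.-1
        + alpha * (\sum_l x l) ^+ m.-1 = l * x k ^+ m.-1.
      by move=> k; rewrite -heq -tapplyE.
    set d := \sum_l u l * x l in heq'.
    set S := \sum_l x l in heq'.
    have hp : (0 < m.-1)%N by lia.
    case: (boolP (odd m.-1)) => hodd.
    +
      have ev : ~~ odd m.-1.+1 by rewrite /= hodd.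
      have Hs : \sum_k x k * (alpha * u k * d ^+ m.-1 + alpha * S ^+ m.-1)
          = alpha * d ^+ m.-1 * d + alpha * S ^+ m.-1 * S.
        transitivity (\sum_k (alpha * d ^+ m.-1 * (u k * x k) + alpha * S ^+ m.-1 * x k)).
          by apply: eq_bigr => k _; ring.
        by rewrite big_split -!mulr_sumr.
      have Hr : \sum_k x k * (alpha * u k * d ^+ m.-1 + alpha * S ^+ m.-1)
          = l * \sum_k x k ^+ m.-1.+1.
        rewrite mulr_sumr; apply: eq_bigr => k _; rewrite heq' exprS; ring.
      have Q : 0 < \sum_k x k ^+ m.-1.+1.
        rewrite (bigD1 i0) //=; apply: ltr_pwDl.
          by rewrite exprn_even_gt0 // hi0 orbT.
        by apply: sumr_ge0 => k _; apply: exprn_even_ge0.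
      rewrite -(pmulr_lge0 _ Q) -Hr Hs -!mulrA -!exprSr.
      by apply: addr_ge0; apply: mulr_ge0; first [exact: (ltW halpha) | exact: exprn_even_ge0].
    +
      rewrite leNgt; apply/negP => hl.
      have h := heq' i; rewrite ui mulr1 in h.
      have A : 0 <= alpha * d ^+ m.-1 by apply: mulr_ge0; [exact: ltW | exact: exprn_even_ge0].
      have B : 0 <= alpha * S ^+ m.-1 by apply: mulr_ge0; [exact: ltW | exact: exprn_even_ge0].
      have C : 0 <= - l * x i ^+ m.-1 by apply: mulr_ge0; [rewrite oppr_ge0; exact: ltW | exact: exprn_even_ge0].
      have A0 : alpha * d ^+ m.-1 = 0 by lra.
      have B0 : alpha * S ^+ m.-1 = 0 by lra.
      have h0 := heq' i0; rewrite mulrAC A0 mul0r B0 addr0 in h0.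
      move/esym/eqP: h0; rewrite mulf_eq0 expf_eq0 hp (negbTE hi0) orbF.
      by move/eqP => l0; rewrite l0 ltxx in hl.
move=> [r [w [wge hsum]]].
have hm1 : m = (m.-1).+1 by lia.
have hm2 : m = (m.-2).+2 by lia.
have s1 : size (j :: nseq m.-1 i) = m by rewrite /= size_nseq -hm1.
have s2 : size (j :: j :: nseq m.-2 i) = m by rewrite /= size_nseq -hm2.
have h1 := hsum _ s1; have h2 := hsum _ s2.
rewrite TE /tpow big_cons prod_nseq uj ui expr1n in h1.
rewrite TE /tpow !big_cons prod_nseq uj ui expr1n in h2.
have hs : \sum_(k < r) tpow (w k) (j :: nseq m.-1 i) = 0 by rewrite -h1; lra.
have z1 : forall k, w k j * w k i ^+ m.-1 = 0.
  move=> k.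
  have nn : forall k', xpredT k' -> 0 <= tpow (w k') (j :: nseq m.-1 i).
    by move=> k' _; rewrite /tpow big_cons prod_nseq mulr_ge0 ?exprn_ge0.
  by have := psumr_eq0P nn hs (i:=k) isT; rewrite /tpow big_cons prod_nseq.
have z2 : forall k, tpow (w k) (j :: j :: nseq m.-2 i) = 0.
  move=> k; rewrite /tpow !big_cons prod_nseq.
  have := z1 k; move/eqP; rewrite mulf_eq0 expf_eq0 => /orP[/eqP-> | /andP[_ /eqP->]].
    by rewrite !mul0r.
  have hp2 : (0 < m.-2)%N by lia.
  by rewrite expr0n gtn_eqF // !mulr0.
rewrite big1 in h2; last by move=> k _; apply: z2.
lra.
Qed.
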